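(* Let $P_1,P_2$ be quantum programs with finite-dimensional state Hilbert spaces $\mathcal{H}_{P_1},\mathcal{H}_{P_2}$, $d_i=\dim\mathcal{H}_{P_i}$, with denotational semantics $\llbracket P_i\rrbracket$. Let $\mathcal{M}_1=\{M_{10},M_{11}\}$ and $\mathcal{M}_2=\{M_{20},M_{21}\}$ be two-outcome measurements on $\mathcal{H}_{P_1}$ and $\mathcal{H}_{P_2}$ respectively, and set $\mathcal{E}_{ij}(X)=M_{ij}XM_{ij}^\dagger$. Let $\rho\in\mathcal{D}^\le(\mathcal{H}_{P_1}\otimes\mathcal{H}_{P_2})$. If $$\mathrm{tr}\big[\mathcal{E}_{10}\circ(\llbracket P_1\rrbracket\circ\mathcal{E}_{11})^n(\mathrm{tr}_{2}(\rho))\big]=\mathrm{tr}\big[\mathcal{E}_{20}\circ(\llbracket P_2\rrbracket\circ\mathcal{E}_{21})^n(\mathrm{tr}_{1}(\rho))\big]$$ holds for every $0\le n\le d_1^2+d_2^2-1$, then it holds for every $n\ge 0$.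
   Context: A quantum program $P$ acts on the tensor product $\mathcal{H}_P$ of the state spaces of its quantum variables; its denotational semantics $\llbracket P\rrbracket$ is a linear map (quantum operation: completely positive, trace non-increasing) on operators on $\mathcal{H}_P$. A (projective) measurement $\{M_m\}$ is a family of operators with $\sum_m M_m^\dagger M_m=I$. $\mathcal{D}^\le(\mathcal{H})$ denotes partial density operators on $\mathcal{H}$; $\mathrm{tr}_1,\mathrm{tr}_2$ denote partial traces over the first and second tensor factor, so $\mathrm{tr}_2(\rho)$ lives on $\mathcal{H}_{P_1}$ and $\mathrm{tr}_1(\rho)$ on $\mathcal{H}_{P_2}$. *)

(* Defs.v *)
(* finite-dimensional quantum states as matrices over an
   arbitrary numeric algebraically closed field C (e.g. the complex numbers). *)
From HB Require Import structures.
From mathcomp Require Import all_boot all_order all_algebra.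
Set Implicit Arguments. Unset Strict Implicit. Unset Printing Implicit Defensive.
Import Order.TTheory GRing.Theory Num.Theory.
Local Open Scope ring_scope.

Section QDefs.
Variable C : numClosedFieldType.

Definition adjmx m n (A : 'M[C]_(m, n)) : 'M[C]_(n, m) := (map_mx Num.conj A)^T.

Definition psd n (A : 'M[C]_n) : Prop :=
  forall v : 'cV[C]_n, 0 <= (adjmx v *m A *m v) 0 0.

Definition pdensity n (rho : 'M[C]_n) : Prop := psd rho /\ \tr rho <= 1.

(* H_1 (x) H_2 is indexed by 'I_(d1 * d2), with basis vector |i>|k> at
   index mxvec_index i k. *)

Definition ptrace2 d1 d2 (rho : 'M[C]_(d1 * d2)) : 'M[C]_d1 :=
  \matrix_(i, j) \sum_(k < d2) rho (mxvec_index i k) (mxvec_index j k).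

Definition ptrace1 d1 d2 (rho : 'M[C]_(d1 * d2)) : 'M[C]_d2 :=
  \matrix_(i, j) \sum_(k < d1) rho (mxvec_index k i) (mxvec_index k j).

Definition linear_super d (E : 'M[C]_d -> 'M[C]_d) : Prop :=
  forall (a : C) (X Y : 'M[C]_d), E (a *: X + Y) = a *: E X + E Y.

(* Y is (id_k (x) E)(X), which is
   characterised blockwise: block (a,b) of Y is E applied to block (a,b) of X. *)
Definition completely_positive d (E : 'M[C]_d -> 'M[C]_d) : Prop :=
  forall (k : nat) (X Y : 'M[C]_(k * d)),
    (forall (a b : 'I_k) (i j : 'I_d),
       Y (mxvec_index a i) (mxvec_index b j) =
       E (\matrix_(i', j') X (mxvec_index a i') (mxvec_index b j')) i j) ->
    psd X -> psd Y.

Definition trace_nonincreasing d (E : 'M[C]_d -> 'M[C]_d) : Prop :=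
  forall X : 'M[C]_d, psd X -> \tr (E X) <= \tr X.

Definition quantum_operation d (E : 'M[C]_d -> 'M[C]_d) : Prop :=
  [/\ linear_super E, completely_positive E & trace_nonincreasing E].

Definition measurement2 d (M0 M1 : 'M[C]_d) : Prop :=
  adjmx M0 *m M0 + adjmx M1 *m M1 = 1%:M.

Definition sandwich d (M : 'M[C]_d) (X : 'M[C]_d) : 'M[C]_d :=
  M *m X *m adjmx M.

Definition loop_term d (P : 'M[C]_d -> 'M[C]_d) (M0 M1 : 'M[C]_d)
  (sigma : 'M[C]_d) (n : nat) : C :=
  \tr (sandwich M0 (iter n (fun X => P (sandwich M1 X)) sigma)).
End QDefs.

(* Main.v *)
Require Import Defs.
From HB Require Import structures.
From mathcomp Require Import all_boot all_order all_algebra.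
From mathcomp Require Import zify.
Set Implicit Arguments. Unset Strict Implicit.
Import Order.TTheory GRing.Theory Num.Theory.
Local Open Scope ring_scope.

Definition mpow (R : pzRingType) N (A : 'M[R]_N) k := iter k (fun B => B *m A) 1%:M.

Lemma seq_ch (R : comNzRingType) N (A : 'M[R]_N) (u : 'rV_N) (w : 'cV_N) :
 (forall i, (i < N)%N -> u *m mpow A i *m w = 0) -> forall i, u *m mpow A i *m w = 0.
Proof.
case: N A u w => [|n] A u w H i.
  by rewrite [u]thinmx0 !mul0mx.
have Ep : forall k, mpow A k = A ^+ k.
  by elim=> [|k IH] /=; rewrite ?idmxE // IH exprSr mulmxE.
pose p := char_poly A.
have CH : \sum_(i < n.+2) p`_i *: A ^+ i = 0.
  have e : p = \sum_(i < n.+2) p`_i *: 'X^i.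
    by rewrite -poly_def -(size_char_poly A) coefK.
  transitivity (horner_mx A p); last exact: Cayley_Hamilton.
  rewrite {2}e rmorph_sum /=; apply: eq_bigr => j _.
  by rewrite horner_mxZ rmorphXn /= horner_mx_X.
have Hk : forall k, \sum_(i < n.+2) p`_i *: (u *m A ^+ (k + i) *m w) = 0.
  move=> k; transitivity (u *m A ^+ k *m (\sum_(i < n.+2) p`_i *: A ^+ i) *m w);
    last by rewrite CH mulmx0 mul0mx.
  rewrite mulmx_sumr mulmx_suml; apply: eq_bigr => j _.
  by rewrite -scalemxAr -scalemxAl exprD mulmxA.
have lc : p`_n.+1 = 1.
  by have /monicP := char_poly_monic A; rewrite /lead_coef size_char_poly.
elim/ltn_ind: i => m IH.
case: (ltnP m n.+1) => hm; first exact: H.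
have := Hk (m - n.+1)%N; rewrite big_ord_recr /= lc scale1r subnK //.
rewrite big1 ?add0r ?Ep //; move=> j _.
by rewrite -Ep IH ?scaler0 //; have := ltn_ord j; lia.
Qed.
Section LinMx.
Variables (R : comNzRingType) (m n : nat) (f : 'rV[R]_m -> 'rV[R]_n).
Hypothesis hf : forall a x y, f (a *: x + y) = a *: f x + f y.
Definition lf := f.
Let hlf : linear lf. Proof. by move=> a x y; exact: hf. Qed.
HB.instance Definition _ := GRing.isLinear.Build R 'rV[R]_m 'rV[R]_n *:%R lf hlf.
Lemma mul_lin1 u : u *m lin1_mx lf = f u.
Proof. exact: mul_rV_lin1. Qed.
End LinMx.

Lemma sandwichL (C : numClosedFieldType) d (M : 'M[C]_d) a X Y :
  sandwich M (a *: X + Y) = a *: sandwich M X + sandwich M Y.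
Proof. by rewrite /sandwich mulmxDr mulmxDl -scalemxAr -scalemxAl. Qed.

Lemma loop_lin (C : numClosedFieldType) d (P : 'M[C]_d -> 'M[C]_d) (M0 M1 : 'M[C]_d) :
  linear_super P ->
  exists (A : 'M[C]_(d * d)) (W : 'M[C]_(d * d, 1)),
    forall sigma k, loop_term P M0 M1 sigma k = (mxvec sigma *m mpow A k *m W) 0 0.
Proof.
move=> hP.
pose g (u : 'rV[C]_(d * d)) := mxvec (P (sandwich M1 (vec_mx u))).
have hg : forall a x y, g (a *: x + y) = a *: g x + g y.
  by move=> a x y; rewrite /g linearP /= sandwichL hP linearP.
pose h (u : 'rV[C]_(d * d)) : 'rV[C]_1 := (\tr (sandwich M0 (vec_mx u)))%:M.
have hh : forall a x y, h (a *: x + y) = a *: h x + h y.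
  by move=> a x y; rewrite /h linearP /= sandwichL linearP /= raddfD /= scale_scalar_mx.
exists (lin1_mx (lf g)), (lin1_mx (lf h)) => sigma k.
have It : mxvec (iter k (fun X => P (sandwich M1 X)) sigma) =
          mxvec sigma *m mpow (lin1_mx (lf g)) k.
  elim: k => [|k IH] /=; first by rewrite mulmx1.
  by rewrite mulmxA -IH (mul_lin1 hg) /g mxvecK.
rewrite -It (mul_lin1 hh) /h mxvecK mxE eqxx mulr1n.
by [].
Qed.

Lemma mpow_block (R : comNzRingType) n1 n2 (A1 : 'M[R]_n1) (A2 : 'M[R]_n2) k :
  mpow (block_mx A1 0 0 A2) k = block_mx (mpow A1 k) 0 0 (mpow A2 k).
Proof.
elim: k => [|k IH] /=; first by rewrite -scalar_mx_block.
by rewrite IH mulmx_block !mulmx0 !mul0mx !addr0 !add0r.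
Qed.

Theorem lemma5p5 (C : numClosedFieldType) (d1 d2 : nat)
  (P1 : 'M[C]_d1 -> 'M[C]_d1) (P2 : 'M[C]_d2 -> 'M[C]_d2)
  (M10 M11 : 'M[C]_d1) (M20 M21 : 'M[C]_d2) (rho : 'M[C]_(d1 * d2)) :
  quantum_operation P1 -> quantum_operation P2 ->
  measurement2 M10 M11 -> measurement2 M20 M21 ->
  pdensity rho ->
  (forall n : nat, (n <= d1 ^ 2 + d2 ^ 2 - 1)%N ->
     loop_term P1 M10 M11 (ptrace2 rho) n = loop_term P2 M20 M21 (ptrace1 rho) n) ->
  forall n : nat,
     loop_term P1 M10 M11 (ptrace2 rho) n = loop_term P2 M20 M21 (ptrace1 rho) n.
Proof.
move=> [hP1 _ _] [hP2 _ _] _ _ _ H n.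
have [A1 [W1 E1]] := loop_lin M10 M11 hP1.
have [A2 [W2 E2]] := loop_lin M20 M21 hP2.
pose v1 := mxvec (ptrace2 rho); pose v2 := mxvec (ptrace1 rho).
have key : forall k, row_mx v1 v2 *m mpow (block_mx A1 0 0 A2) k *m col_mx W1 (- W2) =
   v1 *m mpow A1 k *m W1 - v2 *m mpow A2 k *m W2.
  move=> k; rewrite mpow_block mul_row_block !mulmx0 addr0 add0r mul_row_col.
  by rewrite mulmxN.
have HS : forall i, (i < d1 * d1 + d2 * d2)%N ->
    row_mx v1 v2 *m mpow (block_mx A1 0 0 A2) i *m col_mx W1 (- W2) = 0.
  move=> i hi; rewrite key.
  have e : v1 *m mpow A1 i *m W1 = v2 *m mpow A2 i *m W2.
    apply/matrixP => a b; rewrite !ord1 -E1 -E2 H //.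
    rewrite -!mulnn; lia.
  by rewrite e subrr.
have := seq_ch HS n.
rewrite key => /eqP; rewrite subr_eq0 => /eqP /matrixP /(_ 0 0).
by rewrite -E1 -E2.
Qed.
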